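(* Consider the two-period setting of the context. (i) Assume that for all $n\in\mathcal N$, $\frac{\hat\ell_n^P}{E_n}+\frac12\ge\frac{\hat\ell^P}{E}$. Then for every $\alpha\in(0,1]$ the unique Nash equilibrium of $\mathcal G^{\mathrm{DP}}_\alpha$ is given by $$\ell_n^P=\hat\ell_n^P+\frac{E_n}{E}\frac{1-\alpha}{2}(\hat\ell^O-\hat\ell^P),\qquad \ell_n^O=\hat\ell_n^O+\frac{E_n}{E}\frac{1-\alpha}{2}(\hat\ell^P-\hat\ell^O),$$ and for $\alpha=0$ every feasible profile whose aggregate peak load satisfies $\ell^P=\frac E2$ is a Nash equilibrium of $\mathcal G^{\mathrm{DP}}_0$. (ii) Assume that for all $n\in\mathcal N$, $2(N-1)\hat\ell_n^P\ge(\hat\ell^P-\hat\ell^O)-E_n$. Then for every $\alpha\in[0,1]$ the unique Nash equilibrium of $\mathcal G^{\mathrm{HP}}_\alpha$ is given by $$\ell_n^P=\hat\ell_n^P+\frac{1-\alpha}{2(1+\alpha)}\Big(\phi(\alpha)(\hat\ell^O-\hat\ell^P)+(\hat\ell_n^O-\hat\ell_n^P)\Big),\qquad \ell_n^O=\hat\ell_n^O+\frac{1-\alpha}{2(1+\alpha)}\Big(\phi(\alpha)(\hat\ell^P-\hat\ell^O)+(\hat\ell_n^P-\hat\ell_n^O)\Big),$$ where $\phi(\alpha)=\frac{2\alpha}{(1+\alpha)+(1-\alpha)N}\in[0,1]$.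
   Context: Two-period setting: users $\mathcal N=\{1,\dots,N\}$, periods $\mathcal H=\{P,O\}$ (peak and off-peak). Each user $n$ has energy demand $E_n>0$ and preferred profile $(\hat\ell_n^P,\hat\ell_n^O)$ with $\hat\ell_n^h\ge0$ and $\hat\ell_n^P+\hat\ell_n^O=E_n$; write $E=\sum_nE_n$, $\hat\ell^h=\sum_n\hat\ell_n^h$, and assume $\hat\ell^P\ge\frac E2\ge\hat\ell^O$. User $n$'s feasible set is $\mathcal L_n=\{(\ell_n^P,\ell_n^O):\ell_n^P+\ell_n^O=E_n,\ \ell_n^P\ge0,\ \ell_n^O\ge0\}$; $\ell^h=\sum_n\ell_n^h$. Costs are $C_h(x)=x^2$ for $h\in\{P,O\}$, utilities $u_n(\boldsymbol\ell_n)=-\sum_{h}(\ell_n^h-\hat\ell_n^h)^2$. DP bill: $b_n^{\mathrm{DP}}=\frac{E_n}{E}\big((\ell^P)^2+(\ell^O)^2\big)$; HP bill: $b_n^{\mathrm{HP}}=\sum_h\frac{\ell_n^h}{\ell^h}(\ell^h)^2=\sum_h\ell_n^h\ell^h$. In $\mathcal G^{\mathrm{DP}}_\alpha$ (resp. $\mathcal G^{\mathrm{HP}}_\alpha$), $\alpha\in[0,1]$, user $n$ minimizes $f_n^\alpha=(1-\alpha)b_n-\alpha u_n(\boldsymbol\ell_n)$ over $\mathcal L_n$ with $b_n=b_n^{\mathrm{DP}}$ (resp. $b_n^{\mathrm{HP}}$), given the others' profiles. A Nash equilibrium is a profile in $\prod_n\mathcal L_n$ from which no user can lower $f_n^\alpha$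 by a unilateral feasible deviation. *)

(* Defs.v *)
From HB Require Import structures.
From mathcomp Require Import all_boot all_order all_algebra.
Set Implicit Arguments. Unset Strict Implicit. Unset Printing Implicit Defensive.
Import Order.TTheory GRing.Theory Num.Theory.
Local Open Scope ring_scope.

Section Game.
Variables (R : realFieldType) (N : nat).

Definition tot (l : 'I_N -> R) : R := \sum_(n < N) l n.

Definition feas_n (E : 'I_N -> R) (n : 'I_N) (x y : R) : Prop :=
  x + y = E n /\ 0 <= x /\ 0 <= y.

Definition feasible (E : 'I_N -> R) (lP lO : 'I_N -> R) : Prop :=
  forall n, feas_n E n (lP n) (lO n).

Definition util (hP hO : 'I_N -> R) (lP lO : 'I_N -> R) (n : 'I_N) : R :=
  - ((lP n - hP n) ^+ 2 + (lO n - hO n) ^+ 2).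

Definition bill_DP (E : 'I_N -> R) (lP lO : 'I_N -> R) (n : 'I_N) : R :=
  E n / tot E * ((tot lP) ^+ 2 + (tot lO) ^+ 2).

Definition bill_HP (lP lO : 'I_N -> R) (n : 'I_N) : R :=
  lP n * tot lP + lO n * tot lO.

Definition cost (bill : ('I_N -> R) -> ('I_N -> R) -> 'I_N -> R)
  (hP hO : 'I_N -> R) (alpha : R) (lP lO : 'I_N -> R) (n : 'I_N) : R :=
  (1 - alpha) * bill lP lO n - alpha * util hP hO lP lO n.

Definition upd (l : 'I_N -> R) (n : 'I_N) (x : R) : 'I_N -> R :=
  fun m => if m == n then x else l m.

Definition nash (bill : ('I_N -> R) -> ('I_N -> R) -> 'I_N -> R)
  (E hP hO : 'I_N -> R) (alpha : R) (lP lO : 'I_N -> R) : Prop :=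
  feasible E lP lO /\
  forall (n : 'I_N) (x y : R), feas_n E n x y ->
    cost bill hP hO alpha lP lO n <=
    cost bill hP hO alpha (upd lP n x) (upd lO n y) n.

Definition nash_DP (E hP hO : 'I_N -> R) (alpha : R) :=
  nash (bill_DP E) E hP hO alpha.

Definition nash_HP (E hP hO : 'I_N -> R) (alpha : R) :=
  nash bill_HP E hP hO alpha.

Definition phi (alpha : R) : R :=
  2 * alpha / ((1 + alpha) + (1 - alpha) * N%:R).

End Game.

(* Main.v *)
Require Import Defs.
From mathcomp Require Import all_boot all_order all_algebra.
From mathcomp Require Import ring lra.
Import Order.TTheory GRing.Theory Num.Theory.
Local Open Scope ring_scope.
Lemma quad_vi (R : realFieldType) (G Q x E t : R) : 0 < Q -> 0 <= x <= E -> 0 <= t <= E ->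
  (forall s, 0 <= s <= E -> 0 <= (s - x) * G + Q * (s - x)^+2) -> 0 <= (t - x) * G.
Proof.
move=> Q0 /andP[x0 xE] /andP[t0 tE] H.
rewrite leNgt; apply/negP => Hneg.
set d := t - x in Hneg. set p := - (d*G). set q := Q * d^+2.
have p0 : 0 < p by rewrite /p oppr_gt0.
have dne : d != 0 by apply/eqP => d0; move: Hneg; rewrite d0 mul0r ltxx.
have q0 : 0 < q by rewrite /q mulr_gt0 // lt_def sqrf_eq0 dne sqr_ge0.
have pq0 : 0 < p + q by rewrite addr_gt0.
set l := p / (p + q).
have l0 : 0 < l by rewrite divr_gt0.
have l1 : l <= 1 by rewrite ler_pdivrMr // mul1r lerDl ltW.
have e1 : x + l * d = (1 - l) * x + l * t by rewrite /d; ring.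
have := H (x + l * d).
rewrite e1.
have -> : 0 <= (1 - l) * x + l * t <= E.
  apply/andP; split; first by rewrite addr_ge0 // mulr_ge0 // ?subr_ge0 // ltW.
  have : (1 - l) * x + l * t <= (1 - l) * E + l * E.
    by rewrite lerD // ler_wpM2l // ?subr_ge0 // ltW.
  by have -> : (1 - l) * E + l * E = E by ring.
move=> /(_ isT).
have -> : ((1 - l) * x + l * t - x) * G + Q * ((1 - l) * x + l * t - x) ^+ 2
   = l * (l * q - p) by rewrite /p /q /d; ring.
have -> : l * q - p = - (p ^+ 2 / (p + q)) by rewrite /l; field; rewrite lt0r_neq0.
rewrite mulrN oppr_ge0 leNgt => /negP; apply.
by rewrite mulr_gt0 // divr_gt0 // exprn_gt0.
Qed.

Section H.
Variables (R : realFieldType) (N : nat).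

Lemma upd_eq (l : 'I_N -> R) n x : upd l n x n = x.
Proof. by rewrite /upd eqxx. Qed.

Lemma tot_upd (l : 'I_N -> R) n x : tot (upd l n x) = tot l - l n + x.
Proof.
rewrite /tot (bigD1 n) //= [in RHS](bigD1 n) //= upd_eq.
have -> : \sum_(i < N | i != n) upd l n x i = \sum_(i < N | i != n) l i.
  by apply: eq_bigr => i /negbTE Hi; rewrite /upd Hi.
ring.
Qed.

Lemma tot_add (l1 l2 : 'I_N -> R) : tot (fun n => l1 n + l2 n) = tot l1 + tot l2.
Proof. by rewrite /tot big_split. Qed.

Lemma tot_sub (l1 l2 : 'I_N -> R) : tot (fun n => l1 n - l2 n) = tot l1 - tot l2.
Proof. by rewrite /tot sumrB. Qed.

Lemma tot_scale c (l : 'I_N -> R) : tot (fun n => c * l n) = c * tot l.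
Proof. by rewrite /tot mulr_sumr. Qed.

Lemma tot_const (c : R) : tot (fun _ : 'I_N => c) = N%:R * c.
Proof. by rewrite /tot sumr_const card_ord mulr_natl. Qed.

Lemma tot_ext (l1 l2 : 'I_N -> R) : (forall n, l1 n = l2 n) -> tot l1 = tot l2.
Proof. by move=> H; rewrite /tot; apply: eq_bigr => i _; rewrite H. Qed.

Lemma tot_gt (E : 'I_N -> R) n : (forall m, 0 < E m) -> E n <= tot E.
Proof.
move=> H; rewrite /tot (bigD1 n) //= lerDl sumr_ge0 // => i _; exact: ltW.
Qed.

Lemma diff_DP (E hP hO lP lO : 'I_N -> R) (a : R) n t :
  lP n + lO n = E n -> hP n + hO n = E n ->
  cost (bill_DP E) hP hO a (upd lP n t) (upd lO n (E n - t)) n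
  - cost (bill_DP E) hP hO a lP lO n =
  (t - lP n) * ((1 - a) * (E n / tot E) * 2 * (tot lP - tot lO) + 4 * a * (lP n - hP n))
  + (2 * (1 - a) * (E n / tot E) + 2 * a) * (t - lP n) ^+ 2.
Proof.
move=> h1 h2; rewrite /cost /bill_DP /util !tot_upd !upd_eq.
set r := E n / tot E.
have -> : lO n = E n - lP n by rewrite -h1; ring.
have -> : hO n = E n - hP n by rewrite -h2; ring.
ring.
Qed.

Lemma diff_HP (E hP hO lP lO : 'I_N -> R) (a : R) n t :
  lP n + lO n = E n -> hP n + hO n = E n ->
  cost (@bill_HP R N) hP hO a (upd lP n t) (upd lO n (E n - t)) n
  - cost (@bill_HP R N) hP hO a lP lO n =
  (t - lP n) * ((1 - a) * (tot lP - tot lO + 2 * lP n - E n) + 4 * a * (lP n - hP n))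
  + 2 * (t - lP n) ^+ 2.
Proof.
move=> h1 h2; rewrite /cost /bill_HP /util !tot_upd !upd_eq.
have -> : lO n = E n - lP n by rewrite -h1; ring.
have -> : hO n = E n - hP n by rewrite -h2; ring.
ring.
Qed.

Lemma dp_part (E hP hO : 'I_N -> R)
  (hE : forall n, 0 < E n)
  (hPpos : forall n, 0 <= hP n) (hOpos : forall n, 0 <= hO n)
  (hsum : forall n, hP n + hO n = E n)
  (hpeak1 : tot E / 2 <= tot hP) (hpeak2 : tot hO <= tot E / 2)
  (Hcond : forall n, tot hP / tot E <= hP n / E n + 1 / 2)
  (a : R) (Ha : 0 < a <= 1) (lP lO : 'I_N -> R) :
  nash_DP E hP hO a lP lO <->
  (forall n,
     lP n = hP n + E n / tot E * ((1 - a) / 2) * (tot hO - tot hP) /\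
     lO n = hO n + E n / tot E * ((1 - a) / 2) * (tot hP - tot hO)).
Proof.
case/andP: Ha => a0 a1.
have tsum : tot hP + tot hO = tot E by rewrite -tot_add; apply: tot_ext.
have TEpos : forall n : 'I_N, 0 < tot E.
  by move=> n; apply: (lt_le_trans (hE n)); apply: tot_gt.
set K := (tot E)^-1 * ((1 - a) / 2) * (tot hO - tot hP).
set xs := fun n => hP n + E n * K.
suff -> : nash_DP E hP hO a lP lO <-> forall n, lP n = xs n /\ lO n = E n - xs n.
  split=> H n; case: (H n) => h1 h2; split; rewrite ?h1 ?h2 /xs /K; idtac.
  - ring.
  - by rewrite -(hsum n) -tsum; ring.
  - ring.
  - by rewrite -(hsum n) -tsum; ring.
have totxs : forall n : 'I_N, tot xs = tot hP + (1 - a) / 2 * (tot hO - tot hP).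
  move=> n; rewrite /xs tot_add.
  have -> : tot (fun m => E m * K) = tot (fun m => K * E m) by apply: tot_ext => m; rewrite mulrC.
  rewrite tot_scale /K; field; exact: lt0r_neq0 (TEpos n).
have Gs : forall n, (1 - a) * (E n / tot E) * 2 * (tot xs - (tot E - tot xs))
            + 4 * a * (xs n - hP n) = 0.
  move=> n; rewrite (totxs n) /xs /K -tsum; field.
  by rewrite tsum; exact: lt0r_neq0 (TEpos n).
have xfeas : forall n, 0 <= xs n /\ 0 <= E n - xs n.
  move=> n; have T0 := TEpos n; have e0 := hE n.
  split.
  - have h := Hcond n; rewrite -(ler_pM2r (mulr_gt0 e0 T0)) in h.
    have e1 : tot hP / tot E * (E n * tot E) = tot hP * E n.
      by field; exact: lt0r_neq0.
    have e2 : (hP n / E n + 1 / 2) * (E n * tot E) = hP n * tot E + E n * tot E / 2.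
      by field; exact: lt0r_neq0.
    rewrite e1 e2 in h.
    have -> : xs n = (tot E * hP n + E n * ((1 - a) / 2) * (tot hO - tot hP)) / tot E.
      by rewrite /xs /K; field; exact: lt0r_neq0.
    apply: divr_ge0; last exact: ltW.
    have p : 0 <= a * E n * (tot hP - tot E / 2).
      by rewrite mulr_ge0 // ?subr_ge0 // mulr_ge0 // ltW.
    have hO' : tot hO = tot E - tot hP by rewrite -tsum; ring.
    rewrite hO'; move: h p; clear; generalize (tot E) (tot hP) (hP n) (E n) => T HP hp e.
    by move=> h p; lra.
  - have K0 : K <= 0.
      rewrite /K; apply: mulr_ge0_le0.
        by apply: mulr_ge0; [rewrite invr_ge0 ltW | apply: divr_ge0; rewrite ?subr_ge0].
      by rewrite subr_le0; apply: le_trans hpeak2 hpeak1.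
    have -> : E n - xs n = hO n - E n * K by rewrite /xs -(hsum n); ring.
    rewrite subr_ge0; apply: le_trans (hOpos n).
    by rewrite mulr_ge0_le0 // ltW.
split.
- move=> [Hf Hopt] n0.
  have T0 := TEpos n0.
  have totlO : tot lO = tot E - tot lP.
    have : tot lP + tot lO = tot E.
      by rewrite -tot_add; apply: tot_ext => n; case: (Hf n).
    by move=> <-; ring.
  have VI : forall n, 0 <= (xs n - lP n) *
       ((1 - a) * (E n / tot E) * 2 * (tot lP - tot lO) + 4 * a * (lP n - hP n)).
    move=> n; case: (Hf n) => hfe [hf1 hf2].
    apply: (@quad_vi _ _ (2 * (1 - a) * (E n / tot E) + 2 * a) (lP n) (E n) (xs n)).
    + apply: ltr_wpDl; last by rewrite mulr_gt0.
      apply: mulr_ge0; [apply: mulr_ge0 => //; rewrite subr_ge0 | apply: divr_ge0; apply: ltW] => //.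
    + by rewrite hf1 -hfe lerDl.
    + by case: (xfeas n) => u v; rewrite u -subr_ge0.
    + move=> s /andP[s0 s1]; rewrite -(diff_DP E hP hO lP lO a n s hfe (hsum n)).
      rewrite subr_ge0; apply: Hopt; split; first by ring.
      by rewrite s0 subr_ge0.
  set U := tot lP - tot xs.
  set u := fun n => lP n - xs n.
  set sq := fun n => u n ^+ 2 / E n.
  have key : forall n, 0 <= (- (4 * (1 - a) / tot E) * U) * u n - 4 * a * sq n.
    move=> n; have := VI n.
    have e : (xs n - lP n) *
       ((1 - a) * (E n / tot E) * 2 * (tot lP - tot lO) + 4 * a * (lP n - hP n))
       = E n * ((- (4 * (1 - a) / tot E) * U) * u n - 4 * a * sq n)
         + (xs n - lP n) * ((1 - a) * (E n / tot E) * 2 * (tot xs - (tot E - tot xs))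
            + 4 * a * (xs n - hP n)).
      rewrite /U /sq /u totlO /=; field.
      by rewrite (lt0r_neq0 T0) (lt0r_neq0 (hE n)).
    by rewrite e Gs mulr0 addr0 pmulr_rge0.
  have S : 0 <= tot (fun n => (- (4 * (1 - a) / tot E) * U) * u n - 4 * a * sq n).
    by apply: sumr_ge0 => n _; apply: key.
  rewrite (tot_sub (fun n => (- (4 * (1 - a) / tot E) * U) * u n)
                   (fun n => 4 * a * sq n)) !tot_scale in S.
  have totu : tot u = U by rewrite /u tot_sub.
  rewrite totu in S.
  have sq0 : forall n, 0 <= sq n.
    by move=> n; rewrite /sq divr_ge0 ?sqr_ge0 // ltW.
  have Ssq : 0 <= tot sq by apply: sumr_ge0 => n _.
  have P : 0 <= 4 * (1 - a) / tot E * (U * U).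
    apply: mulr_ge0; last by rewrite -expr2 sqr_ge0.
    by apply: divr_ge0; [apply: mulr_ge0 => //; rewrite subr_ge0 | exact: ltW].
  have Z : tot sq = 0.
    apply/eqP; rewrite eq_le Ssq andbT.
    have : 4 * a * tot sq <= 0.
      move: S P; set w := 4 * (1 - a) / tot E * (U * U).
      have -> : - (4 * (1 - a) / tot E) * U * U = - w by rewrite /w; ring.
      rewrite subr_ge0 => S0 P0; apply: le_trans S0 _; by rewrite oppr_le0.
    by rewrite pmulr_rle0 // mulr_gt0.
  have := @psumr_eq0P _ _ (fun _ => true) sq (fun i _ => sq0 i) Z n0 isT.
  rewrite /sq => /eqP; rewrite mulf_eq0 invr_eq0 (negbTE (lt0r_neq0 (hE n0))) orbF.
  rewrite sqrf_eq0 /u subr_eq0 => /eqP h.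
  split=> //; case: (Hf n0) => hfe _; rewrite -h -hfe; ring.
- move=> H; split.
  + move=> n; case: (H n) => -> ->; case: (xfeas n) => u v.
    by split; [ring | split].
  + move=> n x y [hxy [hx hy]].
    have -> : y = E n - x by rewrite -hxy; ring.
    rewrite -subr_ge0 diff_DP; last by [];  last by case: (H n) => -> ->; ring.
    have tl : tot lP = tot xs by apply: tot_ext => m; case: (H m).
    have tlo : tot lO = tot E - tot xs.
      rewrite -tl -(tot_sub E lP); apply: tot_ext => m; by case: (H m) => -> ->.
    rewrite tl tlo (proj1 (H n)) Gs mulr0 add0r.
    apply: mulr_ge0; last exact: sqr_ge0.
    apply: addr_ge0; last by apply: mulr_ge0 => //; apply: ltW.
    apply: mulr_ge0; first by apply: mulr_ge0 => //; rewrite subr_ge0.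
    by apply: divr_ge0; apply: ltW => //; exact: TEpos n.
Qed.

Lemma dp0_part (E hP hO : 'I_N -> R)
  (hE : forall n, 0 < E n) (hsum : forall n, hP n + hO n = E n)
  (lP lO : 'I_N -> R) :
  feasible E lP lO -> tot lP = tot E / 2 -> nash_DP E hP hO 0 lP lO.
Proof.
move=> Hf Ht; split=> // n x y [hxy [hx hy]].
have -> : y = E n - x by rewrite -hxy; ring.
rewrite -subr_ge0 (diff_DP E hP hO lP lO 0 n x (proj1 (Hf n)) (hsum n)).
have tlo : tot lO = tot E - tot lP.
  have : tot lP + tot lO = tot E.
    by rewrite -tot_add; apply: tot_ext => m; case: (Hf m).
  by move=> <-; ring.
have -> : tot lP - tot lO = 0 by rewrite tlo Ht; field.
have -> : (x - lP n) * ((1 - 0) * (E n / tot E) * 2 * 0 + 4 * 0 * (lP n - hP n)) +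
  (2 * (1 - 0) * (E n / tot E) + 2 * 0) * (x - lP n) ^+ 2
  = 2 * (E n / tot E) * (x - lP n) ^+ 2 by ring.
apply: mulr_ge0; last exact: sqr_ge0.
apply: mulr_ge0 => //; apply: divr_ge0; apply: ltW => //.
by apply: (lt_le_trans (hE n)); apply: tot_gt.
Qed.

Lemma arith_hp (a Nr hp ho D : R) : 0 <= a -> a <= 1 -> 0 <= Nr -> 0 <= hp -> 0 <= ho ->
  D - (hp + ho) <= 2 * (Nr - 1) * hp ->
  0 <= (1 + 3 * a) * (1 + a + (1 - a) * Nr) * hp + (1 - a) * (1 + a + (1 - a) * Nr) * ho
       - 2 * a * (1 - a) * D.
Proof.
move=> a0 a1 N0 hp0 ho0 hD.
have b0 : 0 <= 1 - a by rewrite subr_ge0.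
have h1 : 0 <= a * (1 - a) * ((2 * Nr - 1) * hp + ho - D).
  apply: mulr_ge0; first exact: mulr_ge0.
  by move: hD; rewrite -subr_ge0 => hD; have -> : (2 * Nr - 1) * hp + ho - D = 2 * (Nr - 1) * hp - (D - (hp + ho)) by ring.
have X0 : 0 <= (1 + 3 * a) * (1 + a) + 2 * a * (1 - a) + (1 - a) * (1 - a) * Nr.
  apply: addr_ge0; first apply: addr_ge0.
  - by apply: mulr_ge0; apply: addr_ge0 => //; apply: mulr_ge0.
  - by apply: mulr_ge0 => //; apply: mulr_ge0.
  - by apply: mulr_ge0 => //; apply: mulr_ge0.
have h2 : 0 <= hp * ((1 + 3 * a) * (1 + a) + 2 * a * (1 - a) + (1 - a) * (1 - a) * Nr).
  exact: mulr_ge0.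
have h3 : 0 <= ho * ((1 - a) * (1 - a) * (1 + Nr)).
  by apply: mulr_ge0 => //; apply: mulr_ge0; [apply: mulr_ge0 | apply: addr_ge0].
have -> : (1 + 3 * a) * (1 + a + (1 - a) * Nr) * hp + (1 - a) * (1 + a + (1 - a) * Nr) * ho
       - 2 * a * (1 - a) * D =
  2 * (a * (1 - a) * ((2 * Nr - 1) * hp + ho - D))
  + hp * ((1 + 3 * a) * (1 + a) + 2 * a * (1 - a) + (1 - a) * (1 - a) * Nr)
  + ho * ((1 - a) * (1 - a) * (1 + Nr)) by ring.
by apply: addr_ge0; [apply: addr_ge0 => //; apply: mulr_ge0 | ].
Qed.

Lemma hp_part (E hP hO : 'I_N -> R)
  (hE : forall n, 0 < E n)
  (hPpos : forall n, 0 <= hP n) (hOpos : forall n, 0 <= hO n)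
  (hsum : forall n, hP n + hO n = E n)
  (hpeak1 : tot E / 2 <= tot hP) (hpeak2 : tot hO <= tot E / 2)
  (Hc : forall n, (tot hP - tot hO) - E n <= 2 * (N%:R - 1) * hP n)
  (a : R) (Ha : 0 <= a <= 1) :
       (0 <= phi N a <= 1) /\
       (forall lP lO : 'I_N -> R,
          nash_HP E hP hO a lP lO <->
          (forall n,
             lP n = hP n + (1 - a) / (2 * (1 + a)) *
                      (phi N a * (tot hO - tot hP) + (hO n - hP n)) /\
             lO n = hO n + (1 - a) / (2 * (1 + a)) *
                      (phi N a * (tot hP - tot hO) + (hP n - hO n)))).
Proof.
case/andP: Ha => a0 a1.
have b0 : 0 <= 1 - a by rewrite subr_ge0.
have N0 : 0 <= (N%:R : R) by apply: ler0n.
have a10 : 0 < 1 + a by apply: ltr_pwDl.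
have den0 : 0 < 1 + a + (1 - a) * N%:R by apply: ltr_wpDr => //; apply: mulr_ge0.
have tsum : tot hP + tot hO = tot E by rewrite -tot_add; apply: tot_ext.
have phiE : phi N a = 2 * a / (1 + a + (1 - a) * N%:R) by [].
split.
  rewrite phiE; apply/andP; split; first by apply: divr_ge0 => //; [apply: mulr_ge0 | apply: ltW].
  rewrite ler_pdivrMr // mul1r -subr_ge0.
  have -> : 1 + a + (1 - a) * N%:R - 2 * a = (1 - a) + (1 - a) * N%:R by ring.
  by apply: addr_ge0 => //; apply: mulr_ge0.
move=> lP lO.
set c := (1 - a) / (2 * (1 + a)).
set ph := phi N a.
set xs := fun n => hP n + c * (ph * (tot hO - tot hP) + (hO n - hP n)).
suff -> : nash_HP E hP hO a lP lO <-> forall n, lP n = xs n /\ lO n = E n - xs n.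
  split=> H n; case: (H n) => h1 h2; split; rewrite ?h1 ?h2 /xs //.
  - by rewrite -(hsum n); ring.
  - by rewrite -(hsum n); ring.
have totxs : tot xs = tot hP + c * (ph * (tot hO - tot hP) * N%:R + (tot hO - tot hP)).
  rewrite /xs tot_add tot_scale tot_add tot_const tot_sub; ring.
have a1' : (1 + a) != 0 by apply: lt0r_neq0.
have d1' : (1 + a + (1 - a) * N%:R) != 0 by apply: lt0r_neq0.
have Gs : forall n, (1 - a) * (tot xs - (tot E - tot xs) + 2 * xs n - E n)
            + 4 * a * (xs n - hP n) = 0.
  move=> n; rewrite totxs /xs /c /ph phiE -tsum -(hsum n); field.
  by rewrite a1' d1'.
have xfeas : forall n, 0 <= xs n /\ 0 <= E n - xs n.
  move=> n; split.
  - have -> : xs n = ((1 + 3 * a) * (1 + a + (1 - a) * N%:R) * hP n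
          + (1 - a) * (1 + a + (1 - a) * N%:R) * hO n
          - 2 * a * (1 - a) * (tot hP - tot hO)) / (2 * (1 + a) * (1 + a + (1 - a) * N%:R)).
      by rewrite /xs /c /ph phiE; field; rewrite a1' d1'.
    apply: divr_ge0; last by apply: ltW; apply: mulr_gt0 => //; apply: mulr_gt0.
    apply: arith_hp => //.
    by have := Hc n; rewrite -(hsum n).
  - have -> : E n - xs n = ((1 + 3 * a) * (1 + a + (1 - a) * N%:R) * hO n
          + (1 - a) * (1 + a + (1 - a) * N%:R) * hP n
          + 2 * a * (1 - a) * (tot hP - tot hO)) / (2 * (1 + a) * (1 + a + (1 - a) * N%:R)).
      by rewrite /xs /c /ph phiE -(hsum n); field; rewrite a1' d1'.
    apply: divr_ge0; last by apply: ltW; apply: mulr_gt0 => //; apply: mulr_gt0.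
    have D0 : 0 <= tot hP - tot hO by rewrite subr_ge0; apply: le_trans hpeak2 hpeak1.
    apply: addr_ge0; first apply: addr_ge0.
    + apply: mulr_ge0 => //; apply: mulr_ge0; last exact: ltW.
      by apply: addr_ge0 => //; apply: mulr_ge0.
    + by apply: mulr_ge0 => //; apply: mulr_ge0 => //; apply: ltW.
    + by apply: mulr_ge0 => //; apply: mulr_ge0 => //; apply: mulr_ge0.
split.
- move=> [Hf Hopt] n0.
  have totlO : tot lO = tot E - tot lP.
    have : tot lP + tot lO = tot E.
      by rewrite -tot_add; apply: tot_ext => n; case: (Hf n).
    by move=> <-; ring.
  have VI : forall n, 0 <= (xs n - lP n) *
       ((1 - a) * (tot lP - tot lO + 2 * lP n - E n) + 4 * a * (lP n - hP n)).
    move=> n; case: (Hf n) => hfe [hf1 hf2].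
    apply: (@quad_vi _ _ 2 (lP n) (E n) (xs n)) => //.
    + by rewrite hf1 -hfe lerDl.
    + by case: (xfeas n) => u v; rewrite u -subr_ge0.
    + move=> s /andP[s0 s1]; rewrite -(diff_HP E hP hO lP lO a n s hfe (hsum n)).
      rewrite subr_ge0; apply: Hopt; split; first by ring.
      by rewrite s0 subr_ge0.
  set U := tot lP - tot xs.
  set u := fun n => lP n - xs n.
  have key : forall n, 0 <= (- (2 * (1 - a)) * U) * u n - 2 * (1 + a) * (u n ^+ 2).
    move=> n; have := VI n.
    have e : (xs n - lP n) *
       ((1 - a) * (tot lP - tot lO + 2 * lP n - E n) + 4 * a * (lP n - hP n))
       = ((- (2 * (1 - a)) * U) * u n - 2 * (1 + a) * (u n ^+ 2))
         + (xs n - lP n) * ((1 - a) * (tot xs - (tot E - tot xs) + 2 * xs n - E n)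
            + 4 * a * (xs n - hP n)).
      by rewrite /U /u totlO /=; ring.
    by rewrite e Gs mulr0 addr0.
  have S : 0 <= tot (fun n => (- (2 * (1 - a)) * U) * u n - 2 * (1 + a) * (u n ^+ 2)).
    by apply: sumr_ge0 => n _; apply: key.
  rewrite (tot_sub (fun n => (- (2 * (1 - a)) * U) * u n)
                   (fun n => 2 * (1 + a) * (u n ^+ 2))) !tot_scale in S.
  have totu : tot u = U by rewrite /u tot_sub.
  rewrite totu in S.
  have sq0 : forall n, 0 <= u n ^+ 2 by move=> n; apply: sqr_ge0.
  have Ssq : 0 <= tot (fun n => u n ^+ 2) by apply: sumr_ge0 => n _.
  have P : 0 <= 2 * (1 - a) * (U * U).
    by apply: mulr_ge0; [apply: mulr_ge0 | rewrite -expr2 sqr_ge0].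
  have Z : tot (fun n => u n ^+ 2) = 0.
    apply/eqP; rewrite eq_le Ssq andbT.
    have : 2 * (1 + a) * tot (fun n => u n ^+ 2) <= 0.
      move: S P.
      have -> : - (2 * (1 - a)) * U * U = - (2 * (1 - a) * (U * U)) by ring.
      rewrite subr_ge0 => S0 P0; apply: le_trans S0 _; by rewrite oppr_le0.
    by rewrite pmulr_rle0 // mulr_gt0.
  have := @psumr_eq0P _ _ (fun _ => true) (fun n => u n ^+ 2) (fun i _ => sq0 i) Z n0 isT.
  move=> /eqP; rewrite sqrf_eq0 /u subr_eq0 => /eqP h.
  split=> //; case: (Hf n0) => hfe _; rewrite -h -hfe; ring.
- move=> H; split.
  + move=> n; case: (H n) => -> ->; case: (xfeas n) => u v.
    by split; [ring | split].
  + move=> n x y [hxy [hx hy]].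
    have -> : y = E n - x by rewrite -hxy; ring.
    have hf : lP n + lO n = E n by case: (H n) => -> ->; ring.
    rewrite -subr_ge0 (diff_HP E hP hO lP lO a n x hf (hsum n)).
    have tl : tot lP = tot xs by apply: tot_ext => m; case: (H m).
    have tlo : tot lO = tot E - tot xs.
      rewrite -tl -(tot_sub E lP); apply: tot_ext => m; by case: (H m) => -> ->.
    rewrite tl tlo (proj1 (H n)) Gs mulr0 add0r.
    by apply: mulr_ge0 => //; exact: sqr_ge0.
Qed.
End H.
Theorem theorem3 (R : realFieldType) (N : nat) (E hP hO : 'I_N -> R)
  (hE : forall n, 0 < E n)
  (hPpos : forall n, 0 <= hP n) (hOpos : forall n, 0 <= hO n)
  (hsum : forall n, hP n + hO n = E n)
  (hpeak1 : tot E / 2 <= tot hP) (hpeak2 : tot hO <= tot E / 2) :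
  ((forall n, tot hP / tot E <= hP n / E n + 1 / 2) ->
     (forall alpha : R, 0 < alpha <= 1 ->
        forall lP lO : 'I_N -> R,
          nash_DP E hP hO alpha lP lO <->
          (forall n,
             lP n = hP n + E n / tot E * ((1 - alpha) / 2) * (tot hO - tot hP) /\
             lO n = hO n + E n / tot E * ((1 - alpha) / 2) * (tot hP - tot hO)))
     /\
     (forall lP lO : 'I_N -> R,
        feasible E lP lO -> tot lP = tot E / 2 -> nash_DP E hP hO 0 lP lO))
  /\
  ((forall n, (tot hP - tot hO) - E n <= 2 * (N%:R - 1) * hP n) ->
     forall alpha : R, 0 <= alpha <= 1 ->
       (0 <= phi N alpha <= 1) /\
       (forall lP lO : 'I_N -> R,
          nash_HP E hP hO alpha lP lO <->
          (forall n,
             lP n = hP n + (1 - alpha) / (2 * (1 + alpha)) *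
                      (phi N alpha * (tot hO - tot hP) + (hO n - hP n)) /\
             lO n = hO n + (1 - alpha) / (2 * (1 + alpha)) *
                      (phi N alpha * (tot hP - tot hO) + (hP n - hO n))))).
Proof.
split.
- move=> Hcond; split.
  + move=> alpha Ha lP lO.
    exact: (@dp_part R N E hP hO hE hPpos hOpos hsum hpeak1 hpeak2 Hcond alpha Ha lP lO).
  + move=> lP lO Hf Ht; exact: (@dp0_part R N E hP hO hE hsum lP lO Hf Ht).
- move=> Hc alpha Ha.
  exact: (@hp_part R N E hP hO hE hPpos hOpos hsum hpeak1 hpeak2 Hc alpha Ha).
Qed.
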